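(* Let $\alpha>0$ and let $n$ be a positive integer. Let $f_n(x_1,\dots,x_n;\theta)$ be the joint probability density or mass function of random variables $X_1,\dots,X_n$, parameterized by $\theta\in\Theta\subseteq\mathbb{R}$. Assume there is a statistic $\varphi_n=\varphi(X_1,\dots,X_n)$ and a function $\Lambda$ such that $\frac{f_n(X_1,\dots,X_n;\theta_1)}{f_n(X_1,\dots,X_n;\theta_0)}=\Lambda(\varphi_n,\theta_0,\theta_1)$ for all $\theta_0,\theta_1\in\Theta$, where $\Lambda(\varphi_n,\theta_0,\theta_1)$ is increasing with respect to $\varphi_n$ whenever $\theta_0<\theta_1$. Let $\widehat{\theta}_n$ be a function of $\varphi_n$ taking values in $\Theta$. Then for every $\theta\in\Theta$, $$\Pr\Big\{\tfrac{f_n(X_1,\dots,X_n;\theta)}{f_n(X_1,\dots,X_n;\widehat\theta_n)}\le\tfrac{\alpha}{2},\ \widehat\theta_n\le\theta\ \Big|\ \theta\Big\}\le\tfrac{\alpha}{2},\qquad \Pr\Big\{\tfrac{f_n(X_1,\dots,X_n;\theta)}{f_n(X_1,\dots,X_n;\widehat\theta_n)}\le\tfrac{\alpha}{2},\ \widehat\theta_n\ge\theta\ \Big|\ \theta\Big\}\le\tfrac{\alpha}{2},$$ $$\Pr\Big\{\tfrac{f_n(X_1,\dots,X_n;\theta)}{f_n(X_1,\dots,X_n;\widehat\theta_n)}\le\tfrac{\alpha}{2}\ \Big|\ \theta\Big\}\le\alpha .$$ Moreover, if in addition $\widehat\theta_n$ is a maximum likelihood estimator of $\theta$, then for every nonempty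 subset $\mathscr{S}\subseteq\Theta$ and every $\theta\in\mathscr{S}$, $$\Pr\Big\{\tfrac{\sup_{\vartheta\in\mathscr{S}}f_n(X_1,\dots,X_n;\vartheta)}{\sup_{\vartheta\in\Theta}f_n(X_1,\dots,X_n;\vartheta)}\le\tfrac{\alpha}{2},\ \widehat\theta_n\le\inf\mathscr{S}\ \Big|\ \theta\Big\}\le\tfrac{\alpha}{2},\qquad \Pr\Big\{\tfrac{\sup_{\vartheta\in\mathscr{S}}f_n(X_1,\dots,X_n;\vartheta)}{\sup_{\vartheta\in\Theta}f_n(X_1,\dots,X_n;\vartheta)}\le\tfrac{\alpha}{2},\ \widehat\theta_n\ge\sup\mathscr{S}\ \Big|\ \theta\Big\}\le\tfrac{\alpha}{2},$$ $$\Pr\Big\{\tfrac{\sup_{\vartheta\in\mathscr{S}}f_n(X_1,\dots,X_n;\vartheta)}{\sup_{\vartheta\in\Theta}f_n(X_1,\dots,X_n;\vartheta)}\le\tfrac{\alpha}{2}\ \Big|\ \theta\Big\}\le\alpha .$$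
   Context: $\Pr\{\cdot\mid\theta\}$ denotes probability when $X_1,\dots,X_n$ have joint density/mass function $f_n(\cdot;\theta)$. The random variables $X_1,\dots,X_n$ need not be independent. *)

(* Defs.v *)
From HB Require Import structures.
From mathcomp Require Import all_boot all_order all_algebra.
From mathcomp Require Import all_classical all_reals all_analysis.
Set Implicit Arguments. Unset Strict Implicit. Unset Printing Implicit Defensive.
Import Order.TTheory GRing.Theory Num.Theory.
Local Open Scope classical_set_scope.
Local Open Scope ring_scope.

(* Pr{ A | theta } when the data X = (X_1,...,X_n) (valued in T) has density
   x |-> f x theta with respect to the dominating measure mu
   (mu = Lebesgue measure gives a density, mu = counting measure a mass function). *)
Definition Pr (d : measure_display) (T : measurableType d) (R : realType)
  (mu : {measure set T -> \bar R}) (f : T -> R -> R) (theta : R) (A : set T)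
  : \bar R :=
  (\int[mu]_(x in A) (f x theta)%:E)%E.

(* Main.v *)
Require Import Defs.
From HB Require Import structures.
From mathcomp Require Import all_boot all_order all_algebra.
From mathcomp Require Import all_classical all_reals all_analysis.
From mathcomp Require Import measurable_realfun.
Import Order.TTheory GRing.Theory Num.Theory.
Set Implicit Arguments. Unset Strict Implicit.
Local Open Scope classical_set_scope.
Local Open Scope ring_scope.

Section cover.
Context d (T : measurableType d) (R : realType).

Lemma mle (phi : T -> R) (mphi : measurable_fun setT phi) (s : R) :
  measurable [set y | (phi y <= s)%R].
Proof.
have := mphi measurableT _ (measurable_itv `]-oo, s]); rewrite setTI.
congr measurable; apply/seteqP; split => y /=; rewrite in_itv /=; by [].
Qed.

Lemma cover_nd (nu : {measure set T -> \bar R}) (phi : T -> R)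
  (mphi : measurable_fun setT phi) (V : set R) (b : \bar R) (u : nat -> R) :
  (forall s, V s -> (nu [set y | (phi y <= s)%R] <= b)%E) ->
  {homo u : n m / (n <= m)%N >-> (n <= m)%R} ->
  (forall n, exists2 t, V t & (u n <= t)%R) ->
  (nu (\bigcup_n [set y | (phi y <= u n)%R]) <= b)%E.
Proof.
move=> Hb nd Hu.
have mF n : measurable [set y | (phi y <= u n)%R] by exact: mle.
have cv := @nondecreasing_cvg_mu _ _ _ nu (fun n => [set y | (phi y <= u n)%R]) mF
  (bigcupT_measurable _ mF).
have /(_ _) cv' : {homo (fun n => [set y | (phi y <= u n)%R]) : n m / (n <= m)%N >-> (n <= m)%O}.
  by move=> n m nm; apply/subsetPset => y /= H; apply: le_trans H (nd _ _ nm).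
have c := cv cv'.
rewrite -(cvg_lim _ c) //; apply: lime_le; first by apply/cvg_ex; eexists; exact: c.
apply: nearW => n /=; have [t Vt unt] := Hu n.
apply: le_trans (Hb _ Vt); apply: le_measure; rewrite ?inE; try exact: mle.
by move=> y /= H; apply: le_trans H unt.
Qed.

Lemma cover (nu : {measure set T -> \bar R}) (phi : T -> R)
  (mphi : measurable_fun setT phi) (V : set R) (b : \bar R) :
  (0 <= b)%E ->
  (forall s, V s -> (nu [set y | (phi y <= s)%R] <= b)%E) ->
  exists B, measurable B /\ (forall y s, V s -> (phi y <= s)%R -> B y) /\ (nu B <= b)%E.
Proof.
move=> b0 Hb.
have [[s0 Vs0]|V0] := pselect (V !=set0); last first.
  exists set0; split => //; split; last by rewrite measure0.
  by move=> y s Vs; exfalso; apply: V0; exists s.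
have [[M HM]|nub] := pselect (has_ubound V).
- have hs : has_sup V by split; [exists s0 | exists M].
  have [Vc|nVc] := pselect (V (sup V)).
    exists [set y | (phi y <= sup V)%R]; split; first exact: mle.
    split; last exact: Hb.
    move=> y s Vs /= ys; apply: le_trans ys _; exact: (ub_le_sup hs.2 Vs).
  exists (\bigcup_n [set y | (phi y <= sup V - n.+1%:R^-1)%R]); split.
    by apply: bigcupT_measurable => n; exact: mle.
  split.
    move=> y s Vs ys.
    have sc : (s < sup V)%R.
      rewrite lt_neqAle (ub_le_sup hs.2 Vs) andbT; apply/eqP => E; apply: nVc; by rewrite -E.
    have cs0 : (0 < sup V - s)%R by rewrite subr_gt0.
    exists (Num.truncn (sup V - s)^-1) => //=.
    apply: le_trans ys _; rewrite lerBrDr -lerBrDl.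
    rewrite -[X in (_ <= X)%R](invrK (sup V - s)) lef_pV2 ?posrE ?invr_gt0 //.
    exact/ltW/truncnS_gt.
  apply: (cover_nd mphi Hb) => //.
    move=> n m nm; rewrite lerD2l lerN2 lef_pV2 ?posrE // ler_nat //.
  move=> n; have [e Ve He] := @sup_adherent _ V n.+1%:R^-1 ltac:(by rewrite invr_gt0) hs.
  by exists e => //; apply: ltW.
- exists (\bigcup_n [set y | (phi y <= n%:R)%R]); split.
    by apply: bigcupT_measurable => n; exact: mle.
  split.
    move=> y s _ ys; exists (Num.truncn (phi y)).+1 => //=.
    exact/ltW/truncnS_gt.
  apply: (cover_nd mphi Hb) => //; first by move=> n m nm; rewrite ler_nat.
  move=> n; apply: contra_notP nub => H; exists n%:R => t Vt.
  by rewrite leNgt; apply/negP => nt; apply: H; exists t => //; exact: ltW.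
Qed.

Local Open Scope ereal_scope.
Definition dens (h : T -> \bar R) (mh : measurable_fun [set: T] (h : T -> \bar R))
  (h0 : forall x, 0 <= h x) (mu : {measure set T -> \bar R}) :=
  fun A => \int[mu]_(x in A) h x.

Section densm.
Variables (h : T -> \bar R) (mh : measurable_fun [set: T] (h : T -> \bar R))
  (h0 : forall x, 0 <= h x) (mu : {measure set T -> \bar R}).
Let dens0 : dens mh h0 mu set0 = 0. Proof. by rewrite /dens integral_set0. Qed.
Let dens_ge0 A : 0 <= dens mh h0 mu A. Proof. by apply: integral_ge0 => x _. Qed.
Let dens_sigma : semi_sigma_additive (dens mh h0 mu).
Proof. exact: semi_sigma_additive_nng_induced. Qed.
HB.instance Definition _ := isMeasure.Build _ _ _ (dens mh h0 mu) dens0 dens_ge0 dens_sigma.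
End densm.

Lemma int_mono (mu : {measure set T -> \bar R}) (F G : T -> \bar R) :
  (forall x, 0 <= F x) -> (forall x, F x <= G x) ->
  \int[mu]_x F x <= \int[mu]_x G x.
Proof.
move=> F0 FG; have G0 x : 0 <= G x by apply: le_trans (FG x).
rewrite !ge0_integralTE //; apply: le_ereal_sup => _ [s /= Hs <-].
by exists s => //= x; apply: le_trans (FG x).
Qed.
Local Close Scope ereal_scope.

Section main.
Variables (mu : {measure set T -> \bar R}) (Theta : set R) (f : T -> R -> R)
  (phi : T -> R) (Lambda : R -> R -> R -> R) (g : R -> R) (alpha : R).
Hypotheses (a0 : 0 < alpha)
  (mf : forall th, Theta th -> measurable_fun setT (fun x => f x th))
  (f0 : forall th, Theta th -> forall x, 0 <= f x th)
  (f1 : forall th, Theta th -> (\int[mu]_x (f x th)%:E = 1)%E)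
  (mphi : measurable_fun setT phi)
  (HL : forall th0 th1, Theta th0 -> Theta th1 ->
     forall x, f x th1 = Lambda (phi x) th0 th1 * f x th0)
  (Hmon : forall th0 th1, Theta th0 -> Theta th1 -> th0 < th1 ->
     forall x y, phi x <= phi y ->
       Lambda (phi x) th0 th1 <= Lambda (phi y) th0 th1)
  (Hg : forall x, Theta (g (phi x))).

Let mfE th (Hth : Theta th) : measurable_fun [set: T] ((fun x => (f x th)%:E) : T -> \bar R).
Proof. exact/(measurable_EFinP _ (fun x => f x th)).2/mf. Qed.
Let f0E th (Hth : Theta th) x : (0 <= (f x th)%:E)%E.
Proof. by rewrite lee_fin f0. Qed.

Let nu th (Hth : Theta th) := dens (mfE Hth) (f0E Hth) mu.

Lemma Pr_sub th (Hth : Theta th) (A B : set T) :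
  (forall x, A x -> 0 < f x th -> B x) -> (Pr mu f th A <= Pr mu f th B)%E.
Proof.
move=> AB; rewrite /Pr (integral_mkcond A) (integral_mkcond B).
apply: int_mono => x.
  by rewrite /patch; case: ifP => _ //; exact: f0E.
rewrite /patch; case: ifP => xA; case: ifP => xB //.
  have := f0 Hth x; rewrite le_eqVlt => /predU1P[<-//|fp].
  by move: xB; rewrite (mem_set (AB _ (set_mem xA) fp)).
exact: f0E.
Qed.

Lemma Pr_le1 th (Hth : Theta th) A : (Pr mu f th A <= 1)%E.
Proof.
rewrite -(f1 Hth); have -> : (\int[mu]_x (f x th)%:E)%E = Pr mu f th setT by [].
exact: Pr_sub.
Qed.

Lemma bound_set th t (Hth : Theta th) (Ht : Theta t) (E : set T) (mE : measurable E)
  (c : R) (c0 : 0 <= c) :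
  (forall y, E y -> f y th <= c * f y t) -> (Pr mu f th E <= c%:E)%E.
Proof.
move=> H; rewrite /Pr.
have step : (\int[mu]_(x in E) (f x th)%:E <= \int[mu]_(x in E) (c%:E * (f x t)%:E))%E.
  apply: ge0_le_integral => //.
  - by move=> x _; exact: f0E.
  - exact: measurable_funS (mfE Hth).
  - apply: emeasurable_funM => //.
    exact: measurable_funS (mfE Ht).
apply: le_trans step _.
rewrite ge0_integralZl_EFin //; last 2 first.
  - by move=> x _; exact: f0E.
  - exact: measurable_funS (mfE Ht).
rewrite -[X in (_ <= X)%E]mule1; apply: lee_wpmul2l; first by rewrite lee_fin.
rewrite -(f1 Ht); apply: ge0_subset_integral => //.
  exact: mfE.
by move=> x _; exact: f0E.
Qed.

Lemma pos_t th (Hth : Theta th) x : 0 < f x th ->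
  f x th / f x (g (phi x)) <= alpha / 2 ->
  0 < f x (g (phi x)) /\ f x th <= alpha / 2 * f x (g (phi x)).
Proof.
move=> fp r; have ft0 := f0 (Hg x) x.
have ftp : 0 < f x (g (phi x)).
  rewrite lt_neqAle ft0 andbT; apply/eqP => E.
  move: fp; rewrite (HL (Hg x) Hth x) -E mulr0 ltxx //.
by split => //; rewrite -ler_pdivrMr.
Qed.

Lemma core th (Hth : Theta th) : exists B1 B2 : set T,
  [/\ measurable B1, measurable B2,
   (Pr mu f th B1 <= (alpha / 2)%:E)%E, (Pr mu f th B2 <= (alpha / 2)%:E)%E &
   forall x, 0 < f x th -> f x th / f x (g (phi x)) <= alpha / 2 ->
     (g (phi x) <= th -> B1 x) /\ (th <= g (phi x) -> B2 x)].
Proof.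
have a20 : 0 <= alpha / 2 by rewrite divr_ge0 // ltW.
have [a1|a1] := leP 1 (alpha / 2).
  exists setT, setT; split => //.
  - by apply: le_trans (Pr_le1 Hth _) _; rewrite lee_fin.
  - by apply: le_trans (Pr_le1 Hth _) _; rewrite lee_fin.
pose V1 := [set s | exists x, [/\ 0 < f x th, f x th / f x (g (phi x)) <= alpha / 2,
   g (phi x) <= th & phi x = s]].
pose V2 := [set s | exists x, [/\ 0 < f x th, f x th / f x (g (phi x)) <= alpha / 2,
   th <= g (phi x) & - phi x = s]].
have [B1 [mB1 [HB1 PB1]]] : exists B, measurable B /\
    (forall y s, V1 s -> (phi y <= s)%R -> B y) /\ (nu Hth B <= (alpha / 2)%:E)%E.
  apply: cover; [exact: mphi|by rewrite lee_fin|].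
  move=> _ [x [fp r le <-]].
  have [ftp fle] := pos_t Hth fp r.
  set t := g (phi x) in ftp fle le *.
  have Ht : Theta t by exact: Hg.
  have lt : t < th.
    rewrite lt_neqAle le andbT; apply/eqP => E; move: fle; rewrite -E.
    rewrite -{1}[f x t]mul1r ler_pM2r // leNgt a1 //.
  have Lx : Lambda (phi x) t th <= alpha / 2.
    by move: fle; rewrite (HL Ht Hth x) ler_pM2r.
  apply: (bound_set Hth Ht (mle mphi _) a20) => y /= yx.
  rewrite (HL Ht Hth y); apply: ler_wpM2r; first exact: f0.
  by apply: le_trans Lx; exact: Hmon.
have mphiN : measurable_fun setT (fun x => - phi x) by exact: measurable_funN.
have [B2 [mB2 [HB2 PB2]]] : exists B, measurable B /\
    (forall y s, V2 s -> (- phi y <= s)%R -> B y) /\ (nu Hth B <= (alpha / 2)%:E)%E.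
  apply: cover; [exact: mphiN|by rewrite lee_fin|].
  move=> _ [x [fp r le <-]].
  have [ftp fle] := pos_t Hth fp r.
  set t := g (phi x) in ftp fle le *.
  have Ht : Theta t by exact: Hg.
  have lt : th < t.
    rewrite lt_neqAle le andbT; apply/eqP => E; move: fle; rewrite E.
    rewrite -{1}[f x t]mul1r ler_pM2r // leNgt a1 //.
  have Lx : 1 <= alpha / 2 * Lambda (phi x) th t.
    move: fle; rewrite (HL Hth Ht x) mulrA -{1}[f x th]mul1r ler_pM2r //.
  apply: (bound_set Hth Ht (mle mphiN _) a20) => y /= yx.
  rewrite (HL Hth Ht y) mulrA -{1}[f y th]mul1r; apply: ler_wpM2r; first exact: f0.
  apply: le_trans Lx _; apply: ler_wpM2l => //; apply: Hmon => //.
  by rewrite -lerN2.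
exists B1, B2; split => // x fp r; split => le.
  by apply: (HB1 x (phi x)) => //; exists x.
by apply: (HB2 x (- phi x)) => //; exists x.
Qed.

Lemma final :
  (forall th, Theta th ->
     (Pr mu f th [set x | (f x th / f x (g (phi x)) <= alpha / 2
                          /\ g (phi x) <= th)%R] <= (alpha / 2)%R%:E)%E /\
     (Pr mu f th [set x | (f x th / f x (g (phi x)) <= alpha / 2
                          /\ th <= g (phi x))%R] <= (alpha / 2)%R%:E)%E /\
     (Pr mu f th [set x | (f x th / f x (g (phi x)) <= alpha / 2)%R]
        <= alpha%:E)%E) /\
  ((forall x th, Theta th -> f x th <= f x (g (phi x))) ->
   forall S : set R, S `<=` Theta -> S !=set0 ->
   forall th, S th ->
     (Pr mu f th [set x | (sup [set f x v | v in S] / sup [set f x v | v in Theta]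
                            <= alpha / 2)%R
                          /\ ((g (phi x))%:E <= ereal_inf [set v%:E | v in S])%E]
        <= (alpha / 2)%R%:E)%E /\
     (Pr mu f th [set x | (sup [set f x v | v in S] / sup [set f x v | v in Theta]
                            <= alpha / 2)%R
                          /\ (ereal_sup [set v%:E | v in S] <= (g (phi x))%:E)%E]
        <= (alpha / 2)%R%:E)%E /\
     (Pr mu f th [set x | (sup [set f x v | v in S] / sup [set f x v | v in Theta]
                            <= alpha / 2)%R]
        <= alpha%:E)%E).
Proof.
have Uni th (Hth : Theta th) (B1 B2 : set T) : measurable B1 -> measurable B2 ->
    (Pr mu f th B1 <= (alpha / 2)%:E)%E -> (Pr mu f th B2 <= (alpha / 2)%:E)%E ->
    (Pr mu f th (B1 `|` B2) <= alpha%:E)%E.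
  move=> mB1 mB2 P1 P2.
  change (nu Hth (B1 `|` B2) <= alpha%:E)%E.
  apply: le_trans (measureU2 _ mB1 mB2) _.
  by rewrite [X in (_ <= X%:E)%E](splitr alpha) EFinD; apply: leeD.
split.
  move=> th Hth; have [B1 [B2 [mB1 mB2 P1 P2 HB]]] := core Hth.
  split; [|split].
  - apply: le_trans (Pr_sub Hth (B:=B1) _) P1 => x [r le] fp.
    exact: (HB x fp r).1 le.
  - apply: le_trans (Pr_sub Hth (B:=B2) _) P2 => x [r le] fp.
    exact: (HB x fp r).2 le.
  - apply: le_trans (Pr_sub Hth (B:=B1 `|` B2) _) (Uni th Hth _ _ mB1 mB2 P1 P2).
    move=> x r fp; have [le|le] := leP (g (phi x)) th.
      by left; exact: (HB x fp r).1 le.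
    by right; apply: (HB x fp r).2; exact: ltW.
move=> MLE S STh S0 th Sth; have Hth := STh _ Sth.
have [B1 [B2 [mB1 mB2 P1 P2 HB]]] := core Hth.
have supT x : sup [set f x v | v in Theta] = f x (g (phi x)).
  apply/le_anti/andP; split.
  - apply: ge_sup; first by exists (f x (g (phi x))), (g (phi x)).
    by move=> _ [v Tv <-]; exact: MLE.
  - apply: ub_le_sup; last by exists (g (phi x)).
    by exists (f x (g (phi x))) => _ [v Tv <-]; exact: MLE.
have supS x : f x th <= sup [set f x v | v in S].
  apply: ub_le_sup; last by exists th.
  by exists (f x (g (phi x))) => _ [v Sv <-]; exact/MLE/STh.
have key x : 0 < f x th ->
    sup [set f x v | v in S] / sup [set f x v | v in Theta] <= alpha / 2 ->
    f x th / f x (g (phi x)) <= alpha / 2.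
  move=> fp; rewrite supT; apply: le_trans; apply: ler_wpM2r => //.
  by rewrite invr_ge0; exact: f0 (Hg x) x.
have infS : (ereal_inf [set v%:E | v in S] <= th%:E)%E.
  by apply: ereal_inf_lbound; exists th.
have supS' : (th%:E <= ereal_sup [set v%:E | v in S])%E.
  by apply: ereal_sup_ubound; exists th.
split; [|split].
- apply: le_trans (Pr_sub Hth (B:=B1) _) P1 => x [r le] fp.
  apply: (HB x fp (key x fp r)).1; rewrite -lee_fin; exact: le_trans le infS.
- apply: le_trans (Pr_sub Hth (B:=B2) _) P2 => x [r le] fp.
  apply: (HB x fp (key x fp r)).2; rewrite -lee_fin; exact: le_trans supS' le.
- apply: le_trans (Pr_sub Hth (B:=B1 `|` B2) _) (Uni th Hth _ _ mB1 mB2 P1 P2).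
  move=> x r fp; have {}r := key x fp r; have [le|le] := leP (g (phi x)) th.
    by left; exact: (HB x fp r).1 le.
  by right; apply: (HB x fp r).2; exact: ltW.
Qed.

End main.
End cover.
Unset Implicit Arguments.
Theorem theorem2 (R : realType) (d : measure_display) (T : measurableType d)
  (mu : {measure set T -> \bar R})
  (Theta : set R) (f : T -> R -> R)
  (phi : T -> R) (Lambda : R -> R -> R -> R) (g : R -> R) (alpha : R) :
  0 < alpha ->
  (* f(. ; theta) is a joint density/mass function w.r.t. mu for theta in Theta *)
  (forall th, Theta th -> measurable_fun setT (fun x => f x th)) ->
  (forall th, Theta th -> forall x, 0 <= f x th) ->
  (forall th, Theta th -> (\int[mu]_x (f x th)%:E = 1)%E) ->
  (* the statistic phi_n *)
  measurable_fun setT phi ->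
  (* f(x;th1)/f(x;th0) = Lambda(phi(x), th0, th1) *)
  (forall th0 th1, Theta th0 -> Theta th1 ->
     forall x, f x th1 = Lambda (phi x) th0 th1 * f x th0) ->
  (* Lambda is increasing in phi_n when th0 < th1 *)
  (forall th0 th1, Theta th0 -> Theta th1 -> th0 < th1 ->
     forall x y, phi x <= phi y ->
       Lambda (phi x) th0 th1 <= Lambda (phi y) th0 th1) ->
  (* thetahat_n = g(phi_n) takes values in Theta *)
  (forall x, Theta (g (phi x))) ->
  (forall th, Theta th ->
     (Pr mu f th [set x | (f x th / f x (g (phi x)) <= alpha / 2
                          /\ g (phi x) <= th)%R] <= (alpha / 2)%R%:E)%E /\
     (Pr mu f th [set x | (f x th / f x (g (phi x)) <= alpha / 2
                          /\ th <= g (phi x))%R] <= (alpha / 2)%R%:E)%E /\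
     (Pr mu f th [set x | (f x th / f x (g (phi x)) <= alpha / 2)%R]
        <= alpha%:E)%E) /\
  ((* thetahat_n is a maximum likelihood estimator *)
   (forall x th, Theta th -> f x th <= f x (g (phi x))) ->
   forall S : set R, S `<=` Theta -> S !=set0 ->
   forall th, S th ->
     (Pr mu f th [set x | (sup [set f x v | v in S] / sup [set f x v | v in Theta]
                            <= alpha / 2)%R
                          /\ ((g (phi x))%:E <= ereal_inf [set v%:E | v in S])%E]
        <= (alpha / 2)%R%:E)%E /\
     (Pr mu f th [set x | (sup [set f x v | v in S] / sup [set f x v | v in Theta]
                            <= alpha / 2)%R
                          /\ (ereal_sup [set v%:E | v in S] <= (g (phi x))%:E)%E]
        <= (alpha / 2)%R%:E)%E /\
     (Pr mu f th [set x | (sup [set f x v | v in S] / sup [set f x v | v in Theta]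
                            <= alpha / 2)%R]
        <= alpha%:E)%E).
Proof.
move=> a0 mf f0 f1 mphi HL Hmon Hg.
exact: (@final d T R mu Theta f phi Lambda g alpha a0 mf f0 f1 mphi HL Hmon Hg).
Qed.
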